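(* Let $n\in\mathbb N$, and let $P(z)=\sum_{j\ge0}p_jz^j$ with $p_j\ge0$ for all $j\ge0$, $P(1)=1$ and $P'(1)\in(0,1)$. Let $r>1$ be such that $r>P(r)$ (in particular $P(r)<\infty$). Let $\xi_j=\exp(2\pi\mathbf i j/n)$, $j=1,\dots,n$, and let $C_{P,r}^{(n)}=(c_{hj})_{h,j=1}^n$ be the $n\times n$ matrix with $c_{hj}=(r\xi_h-P(r\xi_j))^{-1}$. Then for all $k=1,\dots,n-1$, $$\sigma_{k+1}\big(C_{P,r}^{(n)}\big)\le\frac{\theta^k\,n}{(1-\theta)(r-p_0)},\qquad\text{where }\theta:=\frac{P(r)-p_0}{r-p_0}\in(0,1),$$ and $\sigma_1\ge\sigma_2\ge\dots$ denote the singular values. *)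

(* Defs.v *)
From HB Require Import structures.
From mathcomp Require Import all_boot all_order all_algebra.
From mathcomp Require Import all_classical all_reals all_analysis.
From mathcomp Require Import complex.
From Stdlib Require Import ClassicalEpsilon.
Set Implicit Arguments. Unset Strict Implicit. Unset Printing Implicit Defensive.
Import Order.TTheory GRing.Theory Num.Theory.
Import numFieldNormedType.Exports.
Local Open Scope ring_scope.
Local Open Scope complex_scope.

Definition ssum (R : realType) (u : nat -> R) : R := limn (series u).

Definition Pser (R : realType) (p : nat -> R) (x : R) : R :=
  ssum (fun j => p j * x ^+ j).

(** P(r e^{i t}) = sum_j p_j r^j e^{i j t}, written via its real and imaginary parts. *)
Definition PserC (R : realType) (p : nat -> R) (r t : R) : R[i] :=
  (ssum (fun j => p j * r ^+ j * cos (j%:R * t)))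
  +i* (ssum (fun j => p j * r ^+ j * sin (j%:R * t))).

Definition ang (R : realType) (n j : nat) : R := 2 * pi * j%:R / n%:R.

Definition xi (R : realType) (n j : nat) : R[i] := cos (ang R n j) +i* sin (ang R n j).

(** The n x n matrix C_{P,r}^{(n)}, entries c_{hj} = (r xi_h - P(r xi_j))^{-1},
    h, j = 1..n (the ordinal h : 'I_n stands for the index h+1). *)
Definition CPr (R : realType) (p : nat -> R) (r : R) (n : nat) : 'M[R[i]]_n :=
  \matrix_(h < n, j < n) (r%:C * xi R n h.+1 - PserC p r (ang R n j.+1))^-1.

Definition adjmx (R : realType) (m n : nat) (A : 'M[R[i]]_(m, n)) : 'M[R[i]]_(n, m) :=
  map_mx (fun z => z^*) A^T.

Definition is_singular_values (R : realType) (n : nat) (A : 'M[R[i]]_n) (s : seq R) :=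
  [/\ size s = n, sorted >=%R s, all (fun x => 0 <= x) s &
      char_poly (adjmx A *m A) = \prod_(x <- s) ('X - ((x ^+ 2)%:C)%:P)].

Definition singular_values (R : realType) (n : nat) (A : 'M[R[i]]_n) : seq R :=
  epsilon (inhabits [::]) (is_singular_values A).

(** sigma A i = the (i+1)-th largest singular value sigma_{i+1}(A). *)
Definition sigma (R : realType) (n : nat) (A : 'M[R[i]]_n) (i : nat) : R :=
  nth 0 (singular_values A) i.

(* Main.v *)
Require Import Defs.
From HB Require Import structures.
From mathcomp Require Import all_boot all_order all_algebra.
From mathcomp Require Import all_classical all_reals all_analysis.
From mathcomp Require Import complex.
From mathcomp Require Import ring lra zify.
Import Order.TTheory GRing.Theory Num.Theory.
Import numFieldNormedType.Exports.
Local Open Scope ring_scope.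
Set Implicit Arguments. Unset Strict Implicit. Unset Printing Implicit Defensive.
Local Open Scope classical_set_scope.
Section LA.
Variable C : numClosedFieldType.
Local Open Scope sesquilinear_scope.
Definition nrm2 n (v : 'rV[C]_n) : C := (v *m v ^t* ) 0 0.
Lemma nrm2E n (v : 'rV[C]_n) : nrm2 v = \sum_j `|v 0 j| ^+ 2.
Proof. rewrite /nrm2 mxE; apply: eq_bigr => j _; by rewrite !mxE normCK. Qed.
Lemma nrm2_ge0 n (v : 'rV[C]_n) : 0 <= nrm2 v.
Proof. rewrite nrm2E; apply: sumr_ge0 => j _; exact: exprn_ge0. Qed.
Lemma nrm2_gt0 n (v : 'rV[C]_n) : v != 0 -> 0 < nrm2 v.
Proof.
move=> vN0; rewrite nrm2E.
have /existsP[i vi] : [exists i, v 0 i != 0].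
  apply: contraNT vN0; rewrite negb_exists => /forallP H.
  by apply/eqP/rowP=> j; rewrite mxE; apply/eqP; move: (H j); rewrite negbK.
rewrite (bigD1 i) //= ltr_wpDr //.
  by apply: sumr_ge0 => j _; exact: exprn_ge0.
by rewrite exprn_gt0 // normr_gt0.
Qed.

Lemma two_mul_le (x y : C) : 0 <= x -> 0 <= y -> 2 * (x * y) <= x ^+ 2 + y ^+ 2.
Proof.
move=> hx hy; rewrite -subr_ge0.
have -> : x ^+ 2 + y ^+ 2 - 2 * (x * y) = (x - y) ^+ 2 by ring.
by apply: real_exprn_even_ge0 => //; rewrite realB // ger0_real.
Qed.

Lemma sqr_sum_le n (a : 'I_n -> C) : (forall j, 0 <= a j) ->
  (\sum_j a j) ^+ 2 <= n%:R * \sum_j a j ^+ 2.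
Proof.
move=> a0.
rewrite -(ler_pM2l (_ : (0:C) < 2)) //.
have -> : 2 * (n%:R * \sum_j a j ^+ 2) = \sum_i \sum_j (a i ^+ 2 + a j ^+ 2).
  under [RHS]eq_bigr do rewrite big_split /= sumr_const card_ord.
  rewrite big_split /= sumr_const card_ord sumrMnl -mulrnDl -mulr_natl.
  rewrite -mulr_natl; ring.
rewrite expr2 mulr_suml mulr_sumr; apply: ler_sum => i _.
rewrite mulr_sumr mulr_sumr; apply: ler_sum => j _.
exact: two_mul_le.
Qed.

Lemma frob n (u : 'rV[C]_n) (E : 'M[C]_n) (e : C) :
  (forall i j, `|E i j| <= e) ->
  nrm2 (u *m E) <= (n%:R * e) ^+ 2 * nrm2 u.
Proof.
move=> hE.
have e0 : forall (i j : 'I_n), 0 <= e by move=> i j; apply: le_trans (hE i j).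
rewrite !nrm2E.
have H1 : forall h, `|(u *m E) 0 h| <= e * \sum_j `|u 0 j|.
  move=> h; rewrite mxE mulr_sumr; apply: le_trans (ler_norm_sum _ _ _) _.
  apply: ler_sum => j _; rewrite normrM mulrC ler_wpM2r //.
have H2 : forall h, `|(u *m E) 0 h| ^+ 2 <= e ^+ 2 * (n%:R * \sum_j `|u 0 j| ^+ 2).
  move=> h.
  have h0 : 0 <= e * \sum_j `|u 0 j| by apply: mulr_ge0; [exact: (e0 h h)|apply: sumr_ge0].
  have := @lerXn2r _ 2 _ _ _ _ (H1 h).
  rewrite !nnegrE normr_ge0 => /(_ isT h0) /le_trans; apply.
  rewrite exprMn; apply: ler_wpM2l; first exact: exprn_ge0 (e0 h h).
  by apply: sqr_sum_le.
apply: le_trans (ler_sum _ (fun h _ => H2 h)) _.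
rewrite sumr_const card_ord le_eqVlt; apply/orP; left; apply/eqP; rewrite -mulr_natl; ring.
Qed.
End LA.
Lemma perm_prod_XsubC (F : idomainType) (s1 s2 : seq F) :
  \prod_(x <- s1) ('X - x%:P) = \prod_(x <- s2) ('X - x%:P) -> perm_eq s1 s2.
Proof.
elim: s1 s2 => [|x s1 IH] s2 /=.
  move=> /(congr1 (size : {poly F} -> nat)).
  rewrite big_nil size_poly1 size_prod_XsubC; case: s2 => //.
rewrite big_cons => E.
have xs2 : x \in s2.
  by rewrite -root_prod_XsubC -E rootM root_XsubC eqxx.
have P := perm_to_rem xs2.
move: E; rewrite (perm_big _ P) /= big_cons => /mulfI E.
have {}E := E (negbT (polyXsubC_eq0 x)).
by rewrite perm_sym (permPl P) perm_cons perm_sym; exact: IH.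
Qed.
Lemma char_poly_conj (F : fieldType) n (P D : 'M[F]_n) : P \in unitmx ->
  char_poly (invmx P *m D *m P) = char_poly D.
Proof.
move=> Pu.
set mP := map_mx polyC P; set mQ := map_mx polyC (invmx P).
have QP : mQ *m mP = 1%:M by rewrite -map_mxM mulVmx // map_mx1.
have E : char_poly_mx (invmx P *m D *m P) = mQ *m char_poly_mx D *m mP.
  rewrite /char_poly_mx !map_mxM -/mP -/mQ mulmxBr mulmxBl.
  by rewrite -mulmxA scalar_mxC -mulmxA QP mulmx1.
rewrite /char_poly E !det_mulmx mulrC mulrA /mP /mQ !det_map_mx -rmorphM.
by rewrite -det_mulmx mulmxV // det1 rmorph1 mul1r.
Qed.
Section Spec.
Variable R : realType.
Local Notation C := R[i].
Local Open Scope sesquilinear_scope.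
Local Open Scope complex_scope.

Lemma trC_mul m n p (A : 'M[C]_(m, n)) (B : 'M[C]_(n, p)) :
  (A *m B) ^t* = B ^t* *m A ^t*.
Proof. by rewrite trmx_mul map_mxM. Qed.

Variable n : nat.
Variable A : 'M[C]_n.
Let M := A *m A ^t*.
Let U := spectralmx M.
Let d := spectral_diag M.

Lemma M_normal : M \is normalmx.
Proof. by apply/eqP; rewrite /M trC_mul trmxCK. Qed.

Lemma M_decomp : M = U ^t* *m diag_mx d *m U.
Proof.
have := orthomx_spectralP M_normal.
by rewrite invmx_unitary ?spectral_unitarymx.
Qed.

Lemma U_unitary : U *m U ^t* = 1%:M.
Proof. exact/unitarymxP/spectral_unitarymx. Qed.

Lemma U_unit : U \in unitmx.
Proof. exact: spectral_unit. Qed.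

Lemma quad (c : 'rV[C]_n) : nrm2 (c *m U *m A) = \sum_j d 0 j * `|c 0 j| ^+ 2.
Proof.
have -> : nrm2 (c *m U *m A) = (c *m diag_mx d *m c ^t* ) 0 0.
  rewrite /nrm2 trC_mul trC_mul -!mulmxA (mulmxA A) -/M M_decomp.
  rewrite !mulmxA -[c *m U *m U ^t*]mulmxA U_unitary mulmx1.
  by rewrite -[c *m diag_mx d *m U *m U ^t*]mulmxA U_unitary mulmx1.
rewrite mxE; apply: eq_bigr => j _.
by rewrite mul_mx_diag !mxE normCK mulrA [_ * d 0 j]mulrC.
Qed.

Lemma nrm2U (c : 'rV[C]_n) : nrm2 (c *m U) = nrm2 c.
Proof.
by rewrite /nrm2 trC_mul mulmxA -(mulmxA c) U_unitary mulmx1.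
Qed.

Lemma d_ge0 i : 0 <= d 0 i.
Proof.
have := nrm2_ge0 (delta_mx 0 i *m U *m A); rewrite quad.
rewrite (bigD1 i) //= big1 ?addr0.
  by rewrite mxE !eqxx normr1 expr1n mulr1.
by move=> j ji; rewrite mxE (negbTE ji) andbF normr0 expr0n mulr0.
Qed.

Lemma char_M : char_poly M = \prod_(i < n) ('X - (d 0 i)%:P).
Proof.
rewrite M_decomp -invmx_unitary ?spectral_unitarymx // char_poly_conj ?U_unit //.
by rewrite char_poly_trig ?diag_mx_is_trig //; apply: eq_bigr => i _; rewrite mxE eqxx mulr1n.
Qed.

Lemma C_ge0_Re (z : C) : 0 <= z -> (complex.Re z)%:C = z /\ 0 <= complex.Re z.
Proof.
case: z => a b; rewrite lecE /= => /andP[/eqP b0 a0].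
by rewrite b0.
Qed.

Lemma sv_exists : exists s : seq R, [/\ size s = n, sorted >=%R s,
  all (fun x => 0 <= x) s & char_poly M = \prod_(x <- s) ('X - ((x ^+ 2)%:C)%:P)].
Proof.
set l := [seq Num.sqrt (complex.Re (d 0 i)) | i <- enum 'I_n].
exists (sort >=%R l); split.
- by rewrite size_sort size_map size_enum_ord.
- by apply: sort_sorted => x y; rewrite orbC; exact: le_total.
- by rewrite all_sort; apply/allP => x /mapP [i _ ->]; exact: sqrtr_ge0.
rewrite char_M (perm_big _ (permEl (perm_sort _ _))) big_map /=.
rewrite big_enum /=; apply: eq_bigr => i _.
have [E1 E2] := C_ge0_Re (d_ge0 i).
by rewrite sqr_sqrtr // E1.
Qed.
Lemma arith_aux (a b c dd n' k' : nat) : (a + dd = b + c)%N -> (a <= n')%N ->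
  (k' < b)%N -> (n' - k' <= c)%N -> (k' < n')%N -> (0 < dd)%N.
Proof. lia. Qed.

Lemma sv_bound (s : seq R) (k : nat) (B : 'M[C]_n) (e : R) :
  size s = n -> sorted >=%R s -> all (fun x => 0 <= x) s ->
  char_poly M = \prod_(x <- s) ('X - ((x ^+ 2)%:C)%:P) ->
  (k < n)%N -> (\rank B <= k)%N -> 0 <= e ->
  (forall i j, `|A i j - B i j| <= e%:C) ->
  nth 0 s k <= n%:R * e.
Proof.
move=> ss so s0 hc kn rB e0 hAB.
set x := nth 0 s k.
have x0 : 0 <= x by apply: (allP s0); rewrite mem_nth // ss.
set t : C := (x ^+ 2)%:C.
pose Pr := fun z : C => t <= z.
have hp : perm_eq [seq d 0 i | i <- enum 'I_n] [seq (y ^+ 2)%:C | y <- s].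
  apply: perm_prod_XsubC; rewrite !big_map -hc char_M.
  by [].
pose dl := [seq d 0 i | i <- enum 'I_n].
have cnt : (k < count Pr dl)%N.
  rewrite (permP hp) count_map -(cat_take_drop k.+1 s) count_cat.
  have Hall : all (preim (fun y : R => (y ^+ 2)%:C) Pr) (take k.+1 s).
    apply/(all_nthP 0) => i; rewrite size_takel ?ss // => hi.
    rewrite nth_take //= /Pr /t lecR.
    have hle : x <= nth 0 s i.
      apply: (@sorted_leq_nth _ >=%R) => //; rewrite ?inE ?ss //;
      try (by move=> y a z h1 h2; exact: le_trans h2 h1);
      try (by move=> y; exact: lexx); exact: leq_trans hi kn.
    nra.
  move: Hall; rewrite all_count => /eqP ->; rewrite size_takel ?ss //.
  exact: leq_addr.
pose P := fun i : 'I_n => Pr (d 0 i).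
set W := (\sum_(i | P i) <<delta_mx 0 i : 'rV[C]_n>>)%MS.
have rW : \rank W = count P (enum 'I_n).
  have := @mxdirect_delta C _ P n id (fun a b _ _ h => h).
  move/mxdirectP => /= ->.
  rewrite -sum1_count.
  under eq_bigr do rewrite mxrank_gen mxrank_delta.
  first [ by rewrite big_enum_cond | by rewrite -enumT | by rewrite enumT | by rewrite big_enum_cond /= ].
have hk : (k < \rank W)%N.
  rewrite rW; move: cnt; rewrite /dl count_map.
  by [].
set K := kermx (U *m B).
have rK : (n - k <= \rank K)%N.
  rewrite /K mxrank_ker; apply: leq_sub2l.
  exact: leq_trans (mxrankM_maxr _ _) rB.
have rS := mxrank_sum_cap W K.
have rWK : (\rank (W + K) <= n)%N := rank_leq_col _.
have : (W :&: K)%MS != 0.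
  rewrite -mxrank_eq0 -lt0n.
  exact: (arith_aux rS rWK hk rK kn).
case/rowV0Pn => v; rewrite sub_capmx => /andP[vW vK] vN0.
set Z := diag_mx (\row_j ((~~ P j)%:R : C)).
have WZ : (W <= kermx Z)%MS.
  apply/sumsmx_subP => i Pi; rewrite genmxE; apply/sub_kermxP; apply/rowP => j.
  rewrite mul_mx_diag !mxE; case: (eqVneq i j) => [<-|ij].
    by rewrite Pi mulr0.
  by rewrite andbF mul0r.
have vP : forall j, ~~ P j -> v 0 j = 0.
  move=> j hj; have /sub_kermxP vZ := submx_trans vW WZ.
  move/rowP/(_ j): vZ; rewrite mul_mx_diag !mxE hj mulr1 => ->.
  by [].
move/sub_kermxP: vK => vK.
set w := v *m U.
have wB : w *m B = 0 by rewrite /w -mulmxA.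
have wA : w *m A = w *m (A - B) by rewrite mulmxBr wB subr0.
have hE : forall i j, `|(A - B) i j| <= e%:C by move=> i j; rewrite !mxE; exact: hAB.
have up := frob w hE; rewrite -wA in up.
have lo : t * nrm2 v <= nrm2 (w *m A).
  rewrite /w quad nrm2E mulr_sumr; apply: ler_sum => j _.
  have [Pj|nPj] := boolP (P j).
    by rewrite ler_wpM2r // exprn_ge0.
  by rewrite vP // normr0 expr0n /= !mulr0.
rewrite /w nrm2U in up.
have pos := nrm2_gt0 vN0.
have := le_trans lo up; rewrite ler_pM2r //.
have -> : (n%:R * e%:C) ^+ 2 = ((n%:R * e) ^+ 2)%:C.
  by rewrite rmorphXn rmorphM rmorph_nat.
rewrite lecR => h.
have ne0 : 0 <= n%:R * e by rewrite mulr_ge0.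
move: h ne0; set y := n%:R * e => h ne0.
nra.
Qed.
End Spec.
From Stdlib Require Import ClassicalEpsilon.
Lemma char_poly_tr (F : comNzRingType) n (N : 'M[F]_n) : char_poly N^T = char_poly N.
Proof.
rewrite /char_poly -det_tr; congr (\det _).
by rewrite /char_poly_mx raddfB /= tr_scalar_mx map_trmx trmxK.
Qed.

Lemma sigma_bound (R : realType) n (A0 : 'M[R[i]]_n) k (B : 'M[R[i]]_n) (e : R) :
  (k < n)%N -> (\rank B <= k)%N -> 0 <= e ->
  (forall i j, `|A0^T i j - B i j| <= (e%:C)%C) -> sigma A0 k <= n%:R * e.
Proof.
move=> kn rB e0 hAB.
have hc : char_poly (adjmx A0 *m A0) = char_poly (A0^T *m (A0^T) ^t* )%sesqui.
  rewrite -char_poly_tr trmx_mul /adjmx map_trmx trmxK.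
  by [].
have ex : exists s, is_singular_values A0 s.
  have [s [h1 h2 h3 h4]] := sv_exists (A0^T).
  by exists s; split => //; rewrite hc.
have := epsilon_spec (inhabits [::]) _ ex; rewrite -/(singular_values A0).
case=> h1 h2 h3 h4.
apply: (sv_bound (A := A0^T)) => //.
  by rewrite -hc.
exact: rB.
Qed.
Section Real.
Variable R : realType.

Lemma cs_step (X Y S c s : R) : X ^+ 2 + Y ^+ 2 <= S ^+ 2 -> 0 <= S ->
  c ^+ 2 + s ^+ 2 = 1 -> X * c + Y * s <= S.
Proof.
move=> h S0 cs.
have h2 : (X * c + Y * s) ^+ 2 <= S ^+ 2.
  have id : (X * c + Y * s) ^+ 2 + (X * s - Y * c) ^+ 2 = (X ^+ 2 + Y ^+ 2) * (c ^+ 2 + s ^+ 2) by ring.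
  rewrite cs mulr1 in id.
  have := sqr_ge0 (X * s - Y * c); lra.
nra.
Qed.

Lemma fin_sum_le (b c s : nat -> R) N : (forall j, 0 <= b j) ->
  (forall j, c j ^+ 2 + s j ^+ 2 = 1) ->
  (\sum_(0 <= j < N) b j * c j) ^+ 2 + (\sum_(0 <= j < N) b j * s j) ^+ 2
   <= (\sum_(0 <= j < N) b j) ^+ 2.
Proof.
move=> b0 cs; elim: N => [|N IH]; first by rewrite !big_nil expr0n /= addr0.
rewrite !big_nat_recr //=.
set X := \sum_(0 <= j < N) b j * c j; set Y := \sum_(0 <= j < N) b j * s j.
set S := \sum_(0 <= j < N) b j.
have S0 : 0 <= S by apply: sumr_ge0.
move: IH; rewrite -/X -/Y -/S => IH.
have st := cs_step IH S0 (cs N).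
have bN := b0 N; have csN := cs N.
have pr : 0 <= b N * (S - (X * c N + Y * s N)) by apply: mulr_ge0 => //; rewrite subr_ge0.
have e1 : (X + b N * c N) ^+ 2 + (Y + b N * s N) ^+ 2 =
  X ^+ 2 + Y ^+ 2 + 2 * b N * (X * c N + Y * s N) + b N ^+ 2 * (c N ^+ 2 + s N ^+ 2) by ring.
rewrite e1 csN mulr1.
have e2 : (S + b N) ^+ 2 = S ^+ 2 + 2 * b N * S + b N ^+ 2 by ring.
rewrite e2.
have e3 : b N * (S - (X * c N + Y * s N)) = b N * S - b N * (X * c N + Y * s N) by ring.
rewrite e3 in pr.
lra.
Qed.

Lemma series_bdd_cvg (b c : nat -> R) : (forall j, 0 <= b j) ->
  (forall j, -1 <= c j <= 1) -> cvgn (series b) ->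
  cvgn (series (fun j => b j * c j)).
Proof.
move=> b0 hc cb.
have cg : cvgn (series (fun j => b j * (1 + c j))).
  apply: (series_le_cvg (v_ := fun j => b j + b j)).
  - by move=> j; have /andP[h1 h2] := hc j; apply: mulr_ge0 => //; lra.
  - by move=> j; have := b0 j; lra.
  - move=> j; have /andP[h1 h2] := hc j; have := b0 j; nra.
  - by have := is_cvg_seriesD cb cb.
have -> : (fun j => b j * c j) = (fun j => b j * (1 + c j)) - b.
  apply: funext => j; rewrite -[RHS]/(b j * (1 + c j) - b j); ring.
exact: is_cvg_seriesB.
Qed.
Lemma pser_bound (b : nat -> R) (t : R) : (forall j, 0 <= b j) -> cvgn (series b) ->
  (ssum (fun j => b j * cos (j%:R * t)) - b 0%N) ^+ 2 +
  (ssum (fun j => b j * sin (j%:R * t))) ^+ 2 <= (ssum b - b 0%N) ^+ 2.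
Proof.
move=> b0 cb.
have cX : cvgn (series (fun j => b j * cos (j%:R * t))).
  by apply: series_bdd_cvg => // j; rewrite cos_geN1 cos_le1.
have cY : cvgn (series (fun j => b j * sin (j%:R * t))).
  by apply: series_bdd_cvg => // j; rewrite sin_geN1 sin_le1.
have nd : nondecreasing_seq (series b).
  exact: (@nondecreasing_series _ b predT 0%N (fun n _ _ => b0 n)).
have hle := nondecreasing_cvgn_le nd cb.
rewrite /ssum !expr2.
have cf : (fun N => (series (fun j => b j * cos (j%:R * t)) N - b 0%N) *
   (series (fun j => b j * cos (j%:R * t)) N - b 0%N) +
   (series (fun j => b j * sin (j%:R * t)) N) * (series (fun j => b j * sin (j%:R * t)) N)) @ \oo
   --> (limn (series (fun j => b j * cos (j%:R * t))) - b 0%N) *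
   (limn (series (fun j => b j * cos (j%:R * t))) - b 0%N) +
   limn (series (fun j => b j * sin (j%:R * t))) * limn (series (fun j => b j * sin (j%:R * t))).
  apply: cvgD; apply: cvgM; try apply: cvgB; try apply: cvg_cst; [exact: cX|exact: cX|exact: cY|exact: cY].
apply: (cvgr_to_le cf).
exists 1%N => // N /= hN.
case: N hN => // N _.
rewrite -!expr2.
have hb := hle N.+1.
rewrite /series /= !big_nat_recl //= mul0r cos0 sin0 mulr1 mulr0 add0r addrAC subrr add0r.
rewrite /series /= big_nat_recl // in hb.
have := fin_sum_le N (b := fun j => b j.+1) (c := fun j => cos (j.+1%:R * t))
  (s := fun j => sin (j.+1%:R * t)) (fun j => b0 j.+1) (fun j => cos2Dsin2 _).
move/le_trans; apply.
have s0 : 0 <= \sum_(0 <= j < N) b j.+1 by apply: sumr_ge0.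
move: hb s0; set S := \sum_(0 <= j < N) b j.+1; set L := limn _.
move=> hb s0; nra.
Qed.
End Real.
Lemma geo (F : fieldType) (a q : F) k : a != 0 -> a - q != 0 ->
  (a - q)^-1 - \sum_(m < k) q ^+ m * a^-1 ^+ m.+1 = (q / a) ^+ k / (a - q).
Proof.
move=> a0 aq0; elim: k => [|k IH]; first by rewrite big_ord0 subr0 expr0 mul1r.
rewrite big_ord_recr /= opprD addrA IH.
rewrite !exprS expr_div_n exprVn.
field.
by rewrite aq0 a0 expf_neq0.
Qed.
Unset Implicit Arguments.
Theorem lemma3p4 (R : realType) (n : nat) (p : nat -> R)
  (hp : forall j, 0 <= p j)
  (hP1 : cvg (series p @ \oo) /\ ssum p = 1)
  (hdP : cvg (series (fun j => j%:R * p j) @ \oo) /\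
         0 < ssum (fun j => j%:R * p j) < 1)
  (r : R) (hr : 1 < r)
  (hPr : cvg (series (fun j => p j * r ^+ j) @ \oo))
  (hrP : Pser p r < r)
  (k : nat) (hk : (1 <= k <= n - 1)%N) :
  let theta := (Pser p r - p 0%N) / (r - p 0%N) in
  sigma (CPr p r n) k <= theta ^+ k * n%:R / ((1 - theta) * (r - p 0%N)).
Proof.
cbv zeta; set theta := (Pser p r - p 0%N) / (r - p 0%N).
have kn : (k < n)%N by lia.
have r0 : 0 < r by apply: lt_trans hr; exact: ltr01.
pose b := fun j => p j * r ^+ j.
have b0 : forall j, 0 <= b j by move=> j; rewrite mulr_ge0 // exprn_ge0 // ltW.
set Q := Pser p r - p 0%N; set rho := r - p 0%N.
have Q0 : 0 <= Q.
  have nd : nondecreasing_seq (series b).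
    exact: (@nondecreasing_series _ b predT 0%N (fun n _ _ => b0 n)).
  have := nondecreasing_cvgn_le nd hPr 1%N.
  rewrite /series /= big_nat1 /b expr0 mulr1 => h.
  by rewrite /Q subr_ge0.
have Qlt : Q < rho by rewrite /Q /rho; lra.
have rho0 : 0 < rho by lra.
have hq : forall t, `|PserC p r t - (p 0%N)%:C%C| <= Q%:C%C.
  move=> t; have := pser_bound t b0 hPr.
  rewrite /PserC normc_def /= lecR subr0 => h.
  rewrite -(ger0_norm Q0) -sqrtr_sqr ler_sqrt ?sqr_ge0 //.
  have e0 : b 0%N = p 0%N by rewrite /b expr0 mulr1.
  by rewrite e0 in h; exact: h.
have hxi : forall h, `|xi R n h| = 1.
  by move=> h; rewrite normc_def /= cos2Dsin2 sqrtr1.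
pose a := fun h : 'I_n => (r%:C * xi R n h.+1 - (p 0%N)%:C)%C.
pose q := fun i : 'I_n => (PserC p r (ang R n i.+1) - (p 0%N)%:C)%C.
have p00 := hp 0%N.
have ha : forall h, (rho%:C)%C <= `|a h|.
  move=> h; apply: le_trans (lerB_dist _ _).
  rewrite normrM hxi mulr1 !ger0_norm ?lecR ?(ltW r0) //.
  by rewrite /rho rmorphB.
have haq : forall i h, ((rho - Q)%:C)%C <= `|a h - q i|.
  move=> i h; apply: le_trans (lerB_dist _ _).
  rewrite rmorphB; apply: lerB; [exact: ha | exact: hq].
have rhoC : (0 : R[i]) < (rho%:C)%C by rewrite ltcR.
have rQC : (0 : R[i]) < ((rho - Q)%:C)%C by rewrite ltcR subr_gt0.
have QC0 : (0 : R[i]) <= (Q%:C)%C by rewrite lecR.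
have a0 : forall h, a h != 0.
  by move=> h; rewrite -normr_gt0; apply: lt_le_trans (ha h).
have aq0 : forall i h, a h - q i != 0.
  by move=> i h; rewrite -normr_gt0; apply: lt_le_trans (haq i h).
pose e := Q ^+ k / rho ^+ k / (rho - Q).
have e0 : 0 <= e.
  rewrite /e; apply: mulr_ge0; first (apply: mulr_ge0; first exact: exprn_ge0).
  - by rewrite invr_ge0 exprn_ge0 // ltW.
  - by rewrite invr_ge0 subr_ge0 ltW.
pose Fm := \matrix_(i < n, m < k) q i ^+ m.
pose Gm := \matrix_(m < k, j < n) (a j)^-1 ^+ m.+1.
have rB : (\rank (Fm *m Gm) <= k)%N.
  exact: leq_trans (mxrankM_maxl _ _) (rank_leq_col _).
have hAB : forall i j, `|(CPr p r n)^T i j - (Fm *m Gm) i j| <= (e%:C)%C.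
  move=> i j; rewrite !mxE.
  have -> : (r%:C * xi R n j.+1 - PserC p r (ang R n i.+1))%C = a j - q i.
    by rewrite /a /q; ring.
  have -> : \sum_(m < k) Fm i m * Gm m j = \sum_(m < k) q i ^+ m * (a j)^-1 ^+ m.+1.
    by apply: eq_bigr => m _; rewrite !mxE.
  rewrite geo // normrM normfV normrX normrM normfV.
  rewrite /e !rmorphM !fmorphV !rmorphXn.
  apply: ler_pM.
  - by rewrite exprn_ge0 // mulr_ge0 // invr_ge0.
  - by rewrite invr_ge0.
  - rewrite -expr_div_n; apply: lerXn2r; rewrite ?nnegrE.
    + by rewrite mulr_ge0 // invr_ge0.
    + by rewrite mulr_ge0 ?invr_ge0 ?lecR // ltW.
    apply: ler_pM; rewrite ?invr_ge0 //; first exact: hq.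
    by rewrite lef_pV2 ?posrE // ?ha //; apply: lt_le_trans (ha j).
  - by rewrite lef_pV2 ?posrE // ?haq //; apply: lt_le_trans (haq i j).
have := sigma_bound kn rB e0 hAB.
move/le_trans; apply.
rewrite le_eqVlt; apply/orP; left; apply/eqP.
have rn0 : rho != 0 by rewrite gt_eqF.
have rq0 : rho - Q != 0 by rewrite subr_eq0 gt_eqF.
rewrite /theta -/Q -/rho /e expr_div_n.
field.
by rewrite rn0 rq0 expf_neq0.
Qed.
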